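(* There exists a computable function $f$ that maps every PRSPDL-formula to a variable-free PRSPDL-formula such that, for every PRSPDL-formula $\varphi$, $\varphi$ is valid over $\ast$-separated models if, and only if, $f(\varphi)$ is valid over $\ast$-separated models (i.e., PRSPDL over $\ast$-separated models embeds into its variable-free fragment).
   Context: Fix a countable set $\mathit{Var}=\{p_1,p_2,\ldots\}$ of propositional variables and a countable set $AP=\{a_1,a_2,\ldots\}$ of atomic program terms. PRSPDL formulas and program terms are defined simultaneously by $\varphi ::= p \mid \bot \mid (\varphi\rightarrow\varphi)\mid [\alpha]\varphi$ and $\alpha ::= a \mid r_1\mid r_2\mid s_1\mid s_2\mid \varphi? \mid (\alpha;\alpha)\mid(\alpha\,\|\,\alpha)\mid \alpha^*$ ($p\in\mathit{Var}$, $a\in AP$; $r_1,r_2,s_1,s_2$ are special program constants; there is no union operation on programs). A ($\ast$-separated) model is $\mathfrak{M}=(S,\{R_a\}_{a\in AP},\ast,V)$ with $S\neq\varnothing$, $R_a\subseteq S\times S$, $\ast:S\times S\to 2^S$ an arbitrary function, and $V:\mathit{Var}\to2^S$. Relations and satisfaction: $(s,t)\in R_{\psi?}$ iff $s=t$ and $\mathfrak{M},s\models\psi$; $R_{\alpha;\beta}$ is relational composition; $R_{\alpha^*}$ is the reflexive transitive closure of $R_\alpha$; $(s,t)\in R_{\alpha\|\beta}$ iff there are $x_1,y_1,x_2,y_2\in S$ with $s\in x_1\ast x_2$, $t\in y_1\ast y_2$, $(x_1,y_1)\in R_\alpha$, $(x_2,y_2)\in R_\beta$; $(s,t)\in R_{r_1}$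 iff $s\in t\ast u$ for some $u$; $(s,t)\in R_{r_2}$ iff $s\in u\ast t$ for some $u$; $(s,t)\in R_{s_1}$ iff $t\in s\ast u$ for some $u$; $(s,t)\in R_{s_2}$ iff $t\in u\ast s$ for some $u$; $\mathfrak{M},s\models p$ iff $s\in V(p)$; $\bot$ is never true; $\rightarrow$ is classical; $\mathfrak{M},s\models[\alpha]\psi$ iff $\psi$ holds at all $R_\alpha$-successors of $s$. A formula is valid over $\ast$-separated models if true at every state of every such model. A formula is variable-free if it contains no propositional variables. *)

(* Defs.v *)
From Stdlib Require Import Arith List Relations.
Import ListNotations.

Inductive form : Type :=
| FVar : nat -> form
| FBot : form
| FImp : form -> form -> form
| FBox : prog -> form -> form
with prog : Type :=
| PAtom : nat -> prog
| Pr1 : prog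
| Pr2 : prog
| Ps1 : prog
| Ps2 : prog
| PTest : form -> prog
| PSeq : prog -> prog -> prog
| PPar : prog -> prog -> prog
| PStar : prog -> prog.

Fixpoint var_free (f : form) : Prop :=
  match f with
  | FVar _ => False
  | FBot => True
  | FImp a b => var_free a /\ var_free b
  | FBox a g => var_free_prog a /\ var_free g
  end
with var_free_prog (a : prog) : Prop :=
  match a with
  | PAtom _ | Pr1 | Pr2 | Ps1 | Ps2 => True
  | PTest g => var_free g
  | PSeq a b | PPar a b => var_free_prog a /\ var_free_prog b
  | PStar a => var_free_prog a
  end.

Record model : Type := {
  st : Type;
  st_ne : inhabited st;
  Rat : nat -> st -> st -> Prop;
  mer : st -> st -> st -> Prop;           (* mer x y s  <->  s \in x * y *)
  val : nat -> st -> Prop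
}.

Fixpoint sat (M : model) (f : form) (s : st M) : Prop :=
  match f with
  | FVar p => val M p s
  | FBot => False
  | FImp a b => sat M a s -> sat M b s
  | FBox a g => forall t, rel M a s t -> sat M g t
  end
with rel (M : model) (a : prog) (s t : st M) : Prop :=
  match a with
  | PAtom n => Rat M n s t
  | PTest g => s = t /\ sat M g s
  | PSeq a b => exists u, rel M a s u /\ rel M b u t
  | PStar a => clos_refl_trans (st M) (fun x y => rel M a x y) s t
  | PPar a b => exists x1 y1 x2 y2,
      mer M x1 x2 s /\ mer M y1 y2 t /\ rel M a x1 y1 /\ rel M b x2 y2
  | Pr1 => exists u, mer M t u s
  | Pr2 => exists u, mer M u t s
  | Ps1 => exists u, mer M s u t
  | Ps2 => exists u, mer M u s t
  end.

Definition valid (f : form) : Prop := forall (M : model) (s : st M), sat M f s.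

Inductive recf : Type :=
| RZero : recf
| RSucc : recf
| RProj : nat -> recf
| RComp : recf -> list recf -> recf
| RPrec : recf -> recf -> recf
| RMu : recf -> recf.

Inductive eval : recf -> list nat -> nat -> Prop :=
| ev_zero args : eval RZero args 0
| ev_succ x args : eval RSucc (x :: args) (S x)
| ev_proj i args : i < length args -> eval (RProj i) args (nth i args 0)
| ev_comp g hs args ys y :
    evals hs args ys -> eval g ys y -> eval (RComp g hs) args y
| ev_prec0 g h rest y : eval g rest y -> eval (RPrec g h) (0 :: rest) y
| ev_precS g h n rest y z :
    eval (RPrec g h) (n :: rest) y -> eval h (n :: y :: rest) z ->
    eval (RPrec g h) (S n :: rest) z
| ev_mu g args n :
    eval g (n :: args) 0 ->
    (forall m, m < n -> exists k, eval g (m :: args) (S k)) ->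
    eval (RMu g) args n
with evals : list recf -> list nat -> list nat -> Prop :=
| evs_nil args : evals [] args []
| evs_cons h hs args y ys :
    eval h args y -> evals hs args ys -> evals (h :: hs) args (y :: ys).

Definition cpair (n m : nat) : nat := (n + m) * (n + m + 1) / 2 + m.

Fixpoint code_form (f : form) : nat :=
  match f with
  | FVar p => cpair 0 p
  | FBot => cpair 1 0
  | FImp a b => cpair 2 (cpair (code_form a) (code_form b))
  | FBox a g => cpair 3 (cpair (code_prog a) (code_form g))
  end
with code_prog (a : prog) : nat :=
  match a with
  | PAtom n => cpair 0 n
  | Pr1 => cpair 1 0
  | Pr2 => cpair 2 0
  | Ps1 => cpair 3 0
  | Ps2 => cpair 4 0
  | PTest g => cpair 5 (code_form g)
  | PSeq a b => cpair 6 (cpair (code_prog a) (code_prog b))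
  | PPar a b => cpair 7 (cpair (code_prog a) (code_prog b))
  | PStar a => cpair 8 (code_prog a)
  end.

Definition computable_form_fun (f : form -> form) : Prop :=
  exists p : recf, forall phi : form, eval p [code_form phi] (code_form (f phi)).

(* Main.v *)
Require Import Defs.
From Stdlib Require Import Arith List Lia Relations Classical.
Import ListNotations.


Definition rc (n : nat) (p : recf) (F : list nat -> nat) : Prop :=
  forall l, length l = n -> eval p l (F l).
Definition rcv n F := exists p, rc n p F.

Lemma rcv_ext n F F' : rcv n F -> (forall l, length l = n -> F l = F' l) -> rcv n F'.
Proof. intros [p H] E. exists p. intros l Hl. rewrite <- E by exact Hl. auto. Qed.

Lemma rcv_zero n : rcv n (fun _ => 0).
Proof. exists RZero. intros l _. constructor. Qed.

Lemma rcv_proj n i : i < n -> rcv n (fun l => nth i l 0).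
Proof. intros H. exists (RProj i). intros l Hl. constructor. lia. Qed.

Lemma rcv_succ1 : rcv 1 (fun l => S (nth 0 l 0)).
Proof. exists RSucc. intros l Hl. destruct l as [|x l]; simpl in Hl; try lia. constructor. Qed.

Lemma rcv_comp1 n G A : rcv 1 G -> rcv n A -> rcv n (fun l => G [A l]).
Proof.
  intros [g Hg] [a Ha]. exists (RComp g [a]). intros l Hl.
  econstructor. econstructor. apply Ha; auto. constructor. apply Hg. reflexivity.
Qed.

Lemma rcv_comp2 n G A B : rcv 2 G -> rcv n A -> rcv n B -> rcv n (fun l => G [A l; B l]).
Proof.
  intros [g Hg] [a Ha] [b Hb]. exists (RComp g [a; b]). intros l Hl.
  econstructor. econstructor. apply Ha; auto. econstructor. apply Hb; auto. constructor.
  apply Hg. reflexivity.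
Qed.

Lemma rcv_comp3 n G A B C : rcv 3 G -> rcv n A -> rcv n B -> rcv n C ->
  rcv n (fun l => G [A l; B l; C l]).
Proof.
  intros [g Hg] [a Ha] [b Hb] [c Hc]. exists (RComp g [a; b; c]). intros l Hl.
  econstructor. econstructor. apply Ha; auto. econstructor. apply Hb; auto.
  econstructor. apply Hc; auto. constructor.
  apply Hg. reflexivity.
Qed.

Lemma rcv_S n A : rcv n A -> rcv n (fun l => S (A l)).
Proof. intros. apply (rcv_comp1 n _ A rcv_succ1 H). Qed.

Lemma rcv_const n c : rcv n (fun _ => c).
Proof. induction c. apply rcv_zero. apply (rcv_S n (fun _ => c)); auto. Qed.

Fixpoint prf (G : list nat -> nat) (H : list nat -> nat) (k : nat) (r : list nat) : nat :=
  match k with 0 => G r | S k => H (k :: prf G H k r :: r) end.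

Lemma rc_prec n g h G H : rc n g G -> rc (S (S n)) h H ->
  rc (S n) (RPrec g h) (fun l => prf G H (hd 0 l) (tl l)).
Proof.
  intros Hg Hh l Hl. destruct l as [|k r]; simpl in Hl; try lia. simpl.
  induction k; simpl.
  - constructor. apply Hg. lia.
  - econstructor. apply IHk. apply Hh. simpl. lia.
Qed.

Lemma rcv_prec1 (F : nat -> nat) (H : nat -> nat -> nat) :
  (forall k, F (S k) = H k (F k)) -> rcv 2 (fun l => H (nth 0 l 0) (nth 1 l 0)) ->
  rcv 1 (fun l => F (nth 0 l 0)).
Proof.
  intros E [h Hh]. destruct (rcv_const 0 (F 0)) as [g Hg].
  eapply rcv_ext. exists (RPrec g h). apply (rc_prec 0 g h _ _ Hg Hh).
  intros l Hl. destruct l as [|k [|]]; simpl in Hl; try lia. simpl.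
  induction k; simpl; auto. rewrite IHk, E. auto.
Qed.

Lemma rcv_prec2 (F : nat -> nat -> nat) (G : nat -> nat) (H : nat -> nat -> nat -> nat) :
  (forall y, F 0 y = G y) ->
  (forall k y, F (S k) y = H k (F k y) y) -> rcv 1 (fun l => G (nth 0 l 0)) ->
  rcv 3 (fun l => H (nth 0 l 0) (nth 1 l 0) (nth 2 l 0)) ->
  rcv 2 (fun l => F (nth 0 l 0) (nth 1 l 0)).
Proof.
  intros E0 E [g Hg] [h Hh].
  eapply rcv_ext. exists (RPrec g h). apply (rc_prec 1 g h _ _ Hg Hh).
  intros l Hl. destruct l as [|k [|y []]]; simpl in Hl; try lia. simpl.
  induction k; simpl; auto. rewrite IHk, E. auto.
Qed.

Lemma rcv_mu n G (M : list nat -> nat) : rcv (S n) G ->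
  (forall l, length l = n -> G (M l :: l) = 0 /\ forall m, m < M l -> G (m :: l) <> 0) ->
  rcv n M.
Proof.
  intros [g Hg] HM. exists (RMu g). intros l Hl. destruct (HM l Hl) as [H0 H1].
  constructor.
  - rewrite <- H0. apply Hg. simpl; lia.
  - intros m Hm. specialize (H1 m Hm). destruct (G (m :: l)) eqn:E; try congruence.
    exists n0. rewrite <- E. apply Hg. simpl; lia.
Qed.

Lemma app1 n (f : nat -> nat) A : rcv 1 (fun l => f (nth 0 l 0)) -> rcv n A ->
  rcv n (fun l => f (A l)).
Proof. intros H1 H2. exact (rcv_comp1 n _ A H1 H2). Qed.
Lemma app2 n (f : nat -> nat -> nat) A B : rcv 2 (fun l => f (nth 0 l 0) (nth 1 l 0)) ->
  rcv n A -> rcv n B -> rcv n (fun l => f (A l) (B l)).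
Proof. intros H1 H2 H3. exact (rcv_comp2 n _ A B H1 H2 H3). Qed.
Lemma app3 n (f : nat -> nat -> nat -> nat) A B C :
  rcv 3 (fun l => f (nth 0 l 0) (nth 1 l 0) (nth 2 l 0)) ->
  rcv n A -> rcv n B -> rcv n C -> rcv n (fun l => f (A l) (B l) (C l)).
Proof. intros H1 H2 H3 H4. exact (rcv_comp3 n _ A B C H1 H2 H3 H4). Qed.

Lemma rcv_add0 : rcv 2 (fun l => Nat.add (nth 0 l 0) (nth 1 l 0)).
Proof.
  apply (rcv_prec2 Nat.add (fun y => y) (fun k a y => S a)); auto.
  apply rcv_proj; lia. apply (rcv_S 3 (fun l => nth 1 l 0)), rcv_proj; lia.
Qed.
Lemma rcv_add n A B : rcv n A -> rcv n B -> rcv n (fun l => A l + B l).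
Proof. apply app2 with (f := Nat.add), rcv_add0. Qed.

Lemma rcv_mul0 : rcv 2 (fun l => Nat.mul (nth 0 l 0) (nth 1 l 0)).
Proof.
  apply (rcv_prec2 Nat.mul (fun y => 0) (fun k a y => y + a)); auto.
  apply rcv_const. apply rcv_add; apply rcv_proj; lia.
Qed.
Lemma rcv_mul n A B : rcv n A -> rcv n B -> rcv n (fun l => A l * B l).
Proof. apply app2 with (f := Nat.mul), rcv_mul0. Qed.

Lemma rcv_pred0 : rcv 1 (fun l => Nat.pred (nth 0 l 0)).
Proof.
  apply (rcv_prec1 Nat.pred (fun k a => k)); auto. apply rcv_proj; lia.
Qed.

Definition rsub (y x : nat) := x - y.
Lemma rcv_rsub : rcv 2 (fun l => rsub (nth 0 l 0) (nth 1 l 0)).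
Proof.
  apply (rcv_prec2 rsub (fun x => x) (fun k a x => Nat.pred a)).
  - intros; unfold rsub; lia.
  - intros; unfold rsub; lia.
  - apply rcv_proj; lia.
  - apply (app1 3 Nat.pred (fun l => nth 1 l 0)). apply rcv_pred0. apply rcv_proj; lia.
Qed.
Lemma rcv_sub n A B : rcv n A -> rcv n B -> rcv n (fun l => A l - B l).
Proof. intros HA HB. exact (app2 n rsub B A rcv_rsub HB HA). Qed.


Fixpoint tri (w : nat) : nat := match w with 0 => 0 | S k => tri k + S k end.
Lemma tri2 w : tri w * 2 = w * (w + 1).
Proof. induction w; simpl; nia. Qed.
Lemma tri_mono a b : a <= b -> tri a <= tri b.
Proof. induction 1; simpl; lia. Qed.
Lemma tri_ge w : w <= tri w.
Proof. induction w; simpl; lia. Qed.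

Lemma cpair_eq a b : cpair a b = tri (a + b) + b.
Proof. unfold cpair. rewrite <- tri2. rewrite Nat.div_mul by lia. reflexivity. Qed.

Lemma rcv_tri0 : rcv 1 (fun l => tri (nth 0 l 0)).
Proof. apply (rcv_prec1 tri (fun k a => a + S k)); auto.
  apply rcv_add. apply rcv_proj; lia. apply rcv_S, rcv_proj; lia. Qed.
Lemma rcv_tri n A : rcv n A -> rcv n (fun l => tri (A l)).
Proof. apply app1, rcv_tri0. Qed.

Lemma rcv_cpair n A B : rcv n A -> rcv n B -> rcv n (fun l => cpair (A l) (B l)).
Proof.
  intros HA HB. apply app2; auto.
  eapply rcv_ext. 2:{ intros l _. symmetry. apply cpair_eq. }
  apply rcv_add. apply rcv_tri, rcv_add; apply rcv_proj; lia. apply rcv_proj; lia.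
Qed.

Fixpoint W (z : nat) : nat :=
  match z with 0 => 0 | S z => if S z <? tri (S (W z)) then W z else S (W z) end.
Lemma W_inv z : tri (W z) <= z < tri (S (W z)).
Proof.
  induction z; simpl. lia.
  destruct (S z <? tri (W z) + S (W z)) eqn:E.
  - apply Nat.ltb_lt in E. simpl in *; lia.
  - apply Nat.ltb_ge in E. simpl in *. lia.
Qed.
Lemma W_uniq z w : tri w <= z < tri (S w) -> W z = w.
Proof.
  intros H. pose proof (W_inv z).
  destruct (Nat.lt_trichotomy (W z) w) as [L|[L|L]]; auto.
  - pose proof (tri_mono (S (W z)) w L). lia.
  - pose proof (tri_mono (S w) (W z) L). lia.
Qed.

Definition test (w z : nat) := 1 - (tri (S w) - z).
Lemma rcv_W : rcv 1 (fun l => W (nth 0 l 0)).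
Proof.
  apply (rcv_mu 1 (fun l => test (nth 0 l 0) (nth 1 l 0))).
  - unfold test. apply rcv_sub. apply rcv_const. apply rcv_sub.
    apply rcv_tri, rcv_S, rcv_proj; lia. apply rcv_proj; lia.
  - intros l Hl. pose proof (W_inv (nth 0 l 0)). unfold test; cbn [nth]. split. lia.
    intros m Hm. pose proof (tri_mono (S m) (W (nth 0 l 0)) Hm). lia.
Qed.

Definition usnd z := z - tri (W z).
Definition ufst z := W z - usnd z.

Lemma W_cpair a b : W (cpair a b) = a + b.
Proof. apply W_uniq. rewrite cpair_eq. simpl. lia. Qed.
Lemma usnd_cpair a b : usnd (cpair a b) = b.
Proof. unfold usnd. rewrite W_cpair, cpair_eq. lia. Qed.
Lemma ufst_cpair a b : ufst (cpair a b) = a.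
Proof. unfold ufst. rewrite usnd_cpair, W_cpair. lia. Qed.

Lemma rcv_usnd n A : rcv n A -> rcv n (fun l => usnd (A l)).
Proof. apply app1. unfold usnd. apply rcv_sub. apply rcv_proj; lia.
  apply rcv_tri. apply app1. apply rcv_W. apply rcv_proj; lia. Qed.
Lemma rcv_ufst n A : rcv n A -> rcv n (fun l => ufst (A l)).
Proof. apply app1. unfold ufst. apply rcv_sub. apply app1. apply rcv_W. apply rcv_proj; lia.
  apply rcv_usnd. apply rcv_proj; lia. Qed.

Definition eqn a b := 1 - ((a - b) + (b - a)).
Lemma eqn_spec a b : eqn a b = if a =? b then 1 else 0.
Proof. unfold eqn. destruct (Nat.eqb_spec a b); lia. Qed.
Lemma rcv_eqn n A B : rcv n A -> rcv n B -> rcv n (fun l => eqn (A l) (B l)).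
Proof. intros. unfold eqn. apply rcv_sub. apply rcv_const.
  apply rcv_add; apply rcv_sub; auto. Qed.

Fixpoint itsnd (j h : nat) := match j with 0 => h | S j => usnd (itsnd j h) end.
Lemma rcv_itsnd n A B : rcv n A -> rcv n B -> rcv n (fun l => itsnd (A l) (B l)).
Proof. apply app2. apply (rcv_prec2 itsnd (fun h => h) (fun k a h => usnd a)); auto.
  apply rcv_proj; lia. apply rcv_usnd, rcv_proj; lia. Qed.

Lemma cpair_ge_l a b : a <= cpair a b.
Proof. rewrite cpair_eq. pose proof (tri_ge (a+b)). lia. Qed.
Lemma cpair_ge_r a b : b <= cpair a b.
Proof. rewrite cpair_eq. lia. Qed.
Lemma cpair_lt t x : 1 <= t -> x < cpair t x.
Proof. intros. rewrite cpair_eq. pose proof (tri_ge (t+x)). lia. Qed.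


Definition look n h i := ufst (itsnd (n - 1 - i) h).
Definition cvar x := cpair 2 (cpair (cpair 3 (cpair (cpair 0 (2*x+1)) (cpair 1 0))) (cpair 1 0)).

Definition stepF n h :=
  eqn (ufst n) 0 * cvar (usnd n) + eqn (ufst n) 1 * n
  + eqn (ufst n) 2 * cpair 2 (cpair (ufst (look n h (ufst (usnd n)))) (ufst (look n h (usnd (usnd n)))))
  + eqn (ufst n) 3 * cpair 3 (cpair (usnd (look n h (ufst (usnd n)))) (ufst (look n h (usnd (usnd n))))).
Definition stepP n h :=
  eqn (ufst n) 0 * cpair 0 (2 * usnd n)
  + (eqn (ufst n) 1 + eqn (ufst n) 2 + eqn (ufst n) 3 + eqn (ufst n) 4) * n
  + eqn (ufst n) 5 * cpair 5 (ufst (look n h (usnd n)))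
  + eqn (ufst n) 6 * cpair 6 (cpair (usnd (look n h (ufst (usnd n)))) (usnd (look n h (usnd (usnd n)))))
  + eqn (ufst n) 7 * cpair 7 (cpair (usnd (look n h (ufst (usnd n)))) (usnd (look n h (usnd (usnd n)))))
  + eqn (ufst n) 8 * cpair 8 (usnd (look n h (usnd n))).
Definition step n h := cpair (stepF n h) (stepP n h).
Fixpoint Hist k := match k with 0 => 0 | S k => cpair (step k (Hist k)) (Hist k) end.
Definition V k := step k (Hist k).

Ltac rcvt :=
  repeat first
   [ apply rcv_const
   | apply rcv_proj; lia
   | apply rcv_cpair | apply rcv_ufst | apply rcv_usnd | apply rcv_eqn | apply rcv_itsnd
   | apply rcv_tri
   | apply rcv_add | apply rcv_mul | apply rcv_sub ].

Lemma rcv_look n A B C : rcv n A -> rcv n B -> rcv n C -> rcv n (fun l => look (A l) (B l) (C l)).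
Proof. intros. apply app3; auto. unfold look. rcvt. Qed.
Lemma rcv_cvar n A : rcv n A -> rcv n (fun l => cvar (A l)).
Proof. intros. apply app1; auto. unfold cvar. rcvt. Qed.

Ltac rs := match goal with
  | |- rcv _ (fun l => ?c) => apply rcv_const
  | |- rcv _ (fun l => nth _ l 0) => apply rcv_proj; lia
  | |- rcv _ (fun l => look _ _ _) => apply rcv_look
  | |- rcv _ (fun l => cvar _) => apply rcv_cvar
  | |- rcv _ (fun l => cpair _ _) => apply rcv_cpair
  | |- rcv _ (fun l => ufst _) => apply rcv_ufst
  | |- rcv _ (fun l => usnd _) => apply rcv_usnd
  | |- rcv _ (fun l => eqn _ _) => apply rcv_eqn
  | |- rcv _ (fun l => _ + _) => apply rcv_add
  | |- rcv _ (fun l => _ * _) => apply rcv_mul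
  | |- rcv _ (fun l => _ - _) => apply rcv_sub
  end.

Lemma rcv_step n A B : rcv n A -> rcv n B -> rcv n (fun l => step (A l) (B l)).
Proof. intros. apply app2; auto. unfold step, stepF, stepP.
  repeat rs.
Qed.

Lemma rcv_V : rcv 1 (fun l => ufst (V (nth 0 l 0))).
Proof.
  apply rcv_ufst. unfold V. apply rcv_step. apply rcv_proj; lia.
  apply (rcv_prec1 Hist (fun k a => cpair (step k a) a)); auto.
  apply rcv_cpair. apply rcv_step; apply rcv_proj; lia. apply rcv_proj; lia.
Qed.

Lemma itsnd_Hist j i : itsnd j (Hist (S (j + i))) = Hist (S i).
Proof.
  revert i; induction j; intros i. reflexivity.
  cbn [itsnd]. replace (S j + i) with (j + S i) by lia. rewrite IHj. cbn [Hist]. apply usnd_cpair.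
Qed.
Lemma look_Hist k i : i < k -> look k (Hist k) i = V i.
Proof.
  intros H. unfold look. replace k with (S ((k - 1 - i) + i)) at 2 by lia.
  rewrite itsnd_Hist. cbn [Hist]. apply ufst_cpair.
Qed.


Fixpoint fF (f : form) : form :=
  match f with
  | FVar p => FImp (FBox (PAtom (2*p+1)) FBot) FBot
  | FBot => FBot
  | FImp a b => FImp (fF a) (fF b)
  | FBox a g => FBox (fP a) (fF g)
  end
with fP (a : prog) : prog :=
  match a with
  | PAtom n => PAtom (2*n)
  | Pr1 => Pr1 | Pr2 => Pr2 | Ps1 => Ps1 | Ps2 => Ps2
  | PTest g => PTest (fF g)
  | PSeq a b => PSeq (fP a) (fP b)
  | PPar a b => PPar (fP a) (fP b)
  | PStar a => PStar (fP a)
  end.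

Scheme form_ind2 := Induction for form Sort Prop
with prog_ind2 := Induction for prog Sort Prop.

Lemma V_unfold n : V n = cpair (stepF n (Hist n)) (stepP n (Hist n)).
Proof. reflexivity. Qed.

Ltac simp := repeat rewrite ?eqn_spec, ?ufst_cpair, ?usnd_cpair; cbn [Nat.eqb];
  repeat rewrite ?Nat.mul_0_l, ?Nat.mul_1_l, ?Nat.add_0_l, ?Nat.add_0_r.

Combined Scheme fp_mutind from form_ind2, prog_ind2.



Opaque cpair ufst usnd Hist look cvar.

Ltac tr := intros; unfold stepF, stepP; repeat rewrite ?ufst_cpair, ?usnd_cpair; rewrite !eqn_spec; cbn [Nat.eqb]; lia.

Lemma sF0 x h : stepF (cpair 0 x) h = cvar x. Proof. tr. Qed.
Lemma sF1 x h : stepF (cpair 1 x) h = cpair 1 x. Proof. tr. Qed.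
Lemma sF2 a b h : stepF (cpair 2 (cpair a b)) h =
  cpair 2 (cpair (ufst (look (cpair 2 (cpair a b)) h a)) (ufst (look (cpair 2 (cpair a b)) h b))).
Proof. tr. Qed.
Lemma sF3 a b h : stepF (cpair 3 (cpair a b)) h =
  cpair 3 (cpair (usnd (look (cpair 3 (cpair a b)) h a)) (ufst (look (cpair 3 (cpair a b)) h b))).
Proof. tr. Qed.
Lemma sP0 x h : stepP (cpair 0 x) h = cpair 0 (2 * x). Proof. tr. Qed.
Lemma sP1 x h : stepP (cpair 1 x) h = cpair 1 x. Proof. tr. Qed.
Lemma sP2 x h : stepP (cpair 2 x) h = cpair 2 x. Proof. tr. Qed.
Lemma sP3 x h : stepP (cpair 3 x) h = cpair 3 x. Proof. tr. Qed.
Lemma sP4 x h : stepP (cpair 4 x) h = cpair 4 x. Proof. tr. Qed.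
Lemma sP5 x h : stepP (cpair 5 x) h = cpair 5 (ufst (look (cpair 5 x) h x)). Proof. tr. Qed.
Lemma sP6 a b h : stepP (cpair 6 (cpair a b)) h =
  cpair 6 (cpair (usnd (look (cpair 6 (cpair a b)) h a)) (usnd (look (cpair 6 (cpair a b)) h b))).
Proof. tr. Qed.
Lemma sP7 a b h : stepP (cpair 7 (cpair a b)) h =
  cpair 7 (cpair (usnd (look (cpair 7 (cpair a b)) h a)) (usnd (look (cpair 7 (cpair a b)) h b))).
Proof. tr. Qed.
Lemma sP8 x h : stepP (cpair 8 x) h = cpair 8 (usnd (look (cpair 8 x) h x)). Proof. tr. Qed.

Lemma sub_lt1 t a b : 1 <= t -> a < cpair t (cpair a b).
Proof. intros. pose proof (cpair_lt t (cpair a b) H). pose proof (cpair_ge_l a b). lia. Qed.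
Lemma sub_lt2 t a b : 1 <= t -> b < cpair t (cpair a b).
Proof. intros. pose proof (cpair_lt t (cpair a b) H). pose proof (cpair_ge_r a b). lia. Qed.

Lemma Vf n : ufst (V n) = stepF n (Hist n).
Proof. apply ufst_cpair. Qed.
Lemma Vp n : usnd (V n) = stepP n (Hist n).
Proof. apply usnd_cpair. Qed.

Ltac lk := repeat (rewrite look_Hist by (first [apply sub_lt1; lia | apply sub_lt2; lia | apply cpair_lt; lia])).

Lemma code_ok :
  (forall phi, ufst (V (code_form phi)) = code_form (fF phi)) /\
  (forall a, usnd (V (code_prog a)) = code_prog (fP a)).
Proof.
  apply fp_mutind; intros; cbn [code_form code_prog fF fP]; rewrite ?Vf, ?Vp;
  rewrite ?sF0, ?sF1, ?sF2, ?sF3, ?sP0, ?sP1, ?sP2, ?sP3, ?sP4, ?sP5, ?sP6, ?sP7, ?sP8; lk;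
  try congruence.
  Transparent cvar. reflexivity.
Qed.


Lemma crt_iff (S : Type) (R R' : S -> S -> Prop) :
  (forall s t, R s t <-> R' s t) -> forall s t, clos_refl_trans S R s t <-> clos_refl_trans S R' s t.
Proof.
  intros E s t; split; induction 1.
  - apply rt_step, E; auto.
  - apply rt_refl.
  - eapply rt_trans; eauto.
  - apply rt_step, E; auto.
  - apply rt_refl.
  - eapply rt_trans; eauto.
Qed.

Lemma sem_ok (S : Type) (ne : inhabited S) (R R' : nat -> S -> S -> Prop)
  (m : S -> S -> S -> Prop) (v v' : nat -> S -> Prop)
  (HR : forall n s t, R' (2*n) s t <-> R n s t)
  (HV : forall i s, v i s <-> exists t, R' (2*i+1) s t) :
  (forall phi s, sat (Build_model S ne R m v) phi s <-> sat (Build_model S ne R' m v') (fF phi) s) /\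
  (forall a s t, rel (Build_model S ne R m v) a s t <-> rel (Build_model S ne R' m v') (fP a) s t).
Proof.
  apply fp_mutind; intros; cbn [sat rel fF fP Rat mer val st] in *.
  - rewrite HV. split.
    + intros [t Ht] H. apply (H t Ht).
    + intros H. apply NNPP. intros H1. apply H. intros t Ht. apply H1. eauto.
  - tauto.
  - rewrite H, H0. tauto.
  - split; intros H1 t Ht.
    + apply H0, H1, H, Ht.
    + apply H0, H1, H, Ht.
  - symmetry; apply HR.
  - tauto.
  - tauto.
  - tauto.
  - tauto.
  - rewrite H. tauto.
  - split; intros [u [H1 H2]]; exists u; split; try apply H; try apply H0; auto.
  - split; intros (x1 & y1 & x2 & y2 & A & B & C & D); exists x1, y1, x2, y2;
      repeat split; auto; try apply H; try apply H0; auto.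
  - apply crt_iff. auto.
Qed.

Lemma fF_valid phi : valid phi <-> valid (fF phi).
Proof.
  split.
  - intros Hv [T ne R' m v'] s.
    pose (R := fun n => R' (2*n)).
    pose (v := fun i s => exists t, R' (2*i+1) s t).
    apply (proj1 (sem_ok T ne R R' m v v' (fun _ _ _ => iff_refl _) (fun _ _ => iff_refl _))).
    apply (Hv (Build_model T ne R m v)).
  - intros Hv [T ne R m v] s.
    pose (R' := fun n => if Nat.even n then R (Nat.div2 n) else fun s (_ : T) => v (Nat.div2 n) s).
    assert (HR : forall n s t, R' (2*n) s t <-> R n s t).
    { intros. unfold R'. rewrite Nat.even_mul. cbn [Nat.even orb]. rewrite Nat.div2_double. tauto. }
    assert (HV : forall i s, v i s <-> exists t, R' (2*i+1) s t).
    { intros. unfold R'. replace (2*i+1) with (S (2*i)) by lia.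
      rewrite Nat.even_succ, Nat.odd_mul. cbn [Nat.odd Nat.even negb andb]. rewrite Nat.div2_succ_double.
      split; [intros; exists s0; auto | intros [_ H]; auto]. }
    apply (proj1 (sem_ok T ne R R' m v v HR HV)).
    apply (Hv (Build_model T ne R' m v)).
Qed.

Lemma fF_vf : (forall phi, var_free (fF phi)) /\ (forall a, var_free_prog (fP a)).
Proof. apply fp_mutind; intros; simpl; auto. Qed.

Theorem theorem5 :
  exists f : form -> form,
    computable_form_fun f /\
    (forall phi : form, var_free (f phi)) /\
    (forall phi : form, valid phi <-> valid (f phi)).
Proof.
  exists fF. split; [|split].
  - destruct rcv_V as [p Hp]. exists p. intros phi.
    rewrite <- (proj1 code_ok). apply (Hp [code_form phi]). reflexivity.
  - apply fF_vf.
  - apply fF_valid.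
Qed.
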